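(* Let $A\in\mathbb{R}^{m\times n}$, $b\in\mathbb{R}^m$, $f(x)=\frac12\|Ax-b\|^2$, and let $x^k,x^{k-1}\in\mathbb{R}^n$ with $\nabla f(x^k)\neq 0$ and $x^k\neq x^{k-1}$. Let $g=\nabla f(x^k)/\|\nabla f(x^k)\|$, $d=(x^k-x^{k-1})/\|x^k-x^{k-1}\|$, $\epsilon=g^td$, and assume $\epsilon^2<1$. Let $S_{11}=g^tA^tAg$, $S_{12}=g^tA^tAd$, $S_{22}=d^tA^tAd$, $\eta_1=1-\epsilon^2$, $\eta_2=-S_{11}-S_{22}+2\epsilon S_{12}$, $\eta_3=S_{11}S_{22}-S_{12}^2$, $$\sigma=\frac{-\eta_2+\sqrt{\eta_2^2-4\eta_1\eta_3}}{2\eta_1},$$ let $(\tau,\rho)$ be the solution of $$\begin{pmatrix}1&\epsilon\\ \epsilon&1\end{pmatrix}\begin{pmatrix}\tau\\ \rho\end{pmatrix}=\begin{pmatrix}\sqrt{\sigma-S_{11}}\\ \sqrt{\sigma-S_{22}}\,\mathrm{sgn}(\epsilon\sigma-S_{12})\end{pmatrix},$$ and $u=\tau g+\rho d$. Then $H=\sigma\mathbf I-uu^t\succeq 0$.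
   Context: $\|\cdot\|$ denotes the Euclidean norm; $\mathrm{sgn}$ is the sign function; $\mathbf I$ is the identity; $\succeq 0$ means positive semidefinite. Under these assumptions $\eta_2^2-4\eta_1\eta_3\ge 0$ and $\sigma\ge S_{11},S_{22}$, so all quantities are real. *)

(* Defs.v *)
From HB Require Import structures.
From mathcomp Require Import all_boot all_order all_algebra.
Set Implicit Arguments. Unset Strict Implicit. Unset Printing Implicit Defensive.
Import Order.TTheory GRing.Theory Num.Theory.
Local Open Scope ring_scope.

Definition dotv (R : rcfType) (n : nat) (u v : 'cV[R]_n) : R := (u^T *m v) 0 0.

Definition enorm (R : rcfType) (n : nat) (v : 'cV[R]_n) : R := Num.sqrt (dotv v v).

Definition grad_f (R : rcfType) (m n : nat) (A : 'M[R]_(m, n)) (b : 'cV[R]_m)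
  (x : 'cV[R]_n) : 'cV[R]_n := A^T *m (A *m x - b).

Definition psd (R : rcfType) (n : nat) (H : 'M[R]_n) : Prop :=
  H^T = H /\ forall v : 'cV[R]_n, 0 <= (v^T *m H *m v) 0 0.

(* Main.v *)
Require Import Defs.
From HB Require Import structures.
From mathcomp Require Import all_boot all_order all_algebra.
From mathcomp Require Import ring lra.
Import Order.TTheory GRing.Theory Num.Theory.
Local Open Scope ring_scope.

Section V.
Context {R : rcfType} {n : nat}.
Implicit Types u v w : 'cV[R]_n.

Lemma dotvC u v : dotv u v = dotv v u.
Proof.
rewrite /dotv; have -> : (u^T *m v) 0 0 = (u^T *m v)^T 0 0 by rewrite [in RHS]mxE.
by rewrite trmx_mul trmxK.
Qed.

Lemma dotvDl u v w : dotv (u + v) w = dotv u w + dotv v w.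
Proof. by rewrite /dotv linearD /= mulmxDl mxE. Qed.

Lemma dotvZl a u w : dotv (a *: u) w = a * dotv u w.
Proof. by rewrite /dotv linearZ /= -scalemxAl mxE. Qed.

Lemma dotvDr u v w : dotv w (u + v) = dotv w u + dotv w v.
Proof. by rewrite dotvC dotvDl !(dotvC w). Qed.

Lemma dotvZr a u w : dotv w (a *: u) = a * dotv w u.
Proof. by rewrite dotvC dotvZl dotvC. Qed.

Lemma dotvE u v : dotv u v = \sum_i u i 0 * v i 0.
Proof. by rewrite /dotv mxE; apply: eq_bigr => i _; rewrite mxE. Qed.

Lemma dotv_ge0 u : 0 <= dotv u u.
Proof. by rewrite dotvE; apply: sumr_ge0 => i _; rewrite -expr2 sqr_ge0. Qed.

Lemma dotv_eq0 u : dotv u u = 0 -> u = 0.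
Proof.
rewrite dotvE => /psumr_eq0P H; apply/matrixP => i j.
have {}H := H (fun i _ => ltac:(rewrite -expr2; exact: sqr_ge0)).
rewrite (ord1 j) mxE; have := H i isT; rewrite -expr2.
by move/eqP; rewrite sqrf_eq0 => /eqP.
Qed.

Lemma dotv_CS u v : dotv u v ^+ 2 <= dotv u u * dotv v v.
Proof.
set a := dotv u u; set b := dotv u v; set c := dotv v v.
have H := dotv_ge0 (a *: v - b *: u).
rewrite -scaleNr !(dotvDl, dotvDr, dotvZl, dotvZr) (dotvC v u) -/a -/b -/c in H.
have ha : 0 <= a := dotv_ge0 u.
have hc : 0 <= c := dotv_ge0 v.
have [a0|] := eqVneq a 0.
  have u0 : u = 0 := @dotv_eq0 u a0.
  have -> : b = 0 by rewrite /b u0 /dotv linear0 mul0mx mxE.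
  by rewrite a0 expr0n /= mul0r.
move=> an0; have ap : 0 < a by rewrite lt0r an0.
have : 0 <= a * (a * c - b ^+ 2) by nra.
rewrite pmulr_rge0 //; lra.
Qed.

Lemma dotv_unit v : v != 0 ->
  dotv ((enorm v)^-1 *: v) ((enorm v)^-1 *: v) = 1.
Proof.
move=> v0; rewrite dotvZl dotvZr /enorm.
have Np : 0 < dotv v v.
  rewrite lt0r dotv_ge0 andbT; apply/eqP => /dotv_eq0 h; by rewrite h eqxx in v0.
have e2 := sqr_sqrtr (ltW Np).
have ep : 0 < Num.sqrt (dotv v v) by rewrite sqrtr_gt0.
rewrite -{3}e2 expr2; field; lra.
Qed.

Lemma quadE s u v :
  (v^T *m (s%:M - u *m u^T) *m v) 0 0 = s * dotv v v - dotv v u ^+ 2.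
Proof.
rewrite mulmxBr mulmxBl mxE [in RHS]expr2 mul_mx_scalar -scalemxAl mxE.
rewrite [X in _ + X]mxE !mulmxA -(mulmxA (v^T *m u)) [X in _ - X]mxE big_ord1.
by rewrite -/(dotv v v) -/(dotv v u) -/(dotv u v) (dotvC u v).
Qed.

Lemma symmE s u : (s%:M - u *m u^T)^T = s%:M - u *m u^T :> 'M[R]_n.
Proof. by rewrite linearB /= tr_scalar_mx trmx_mul trmxK. Qed.
Lemma dotv_comb t r u v : dotv (t *: u + r *: v) (t *: u + r *: v)
  = t ^+ 2 * dotv u u + 2 * t * r * dotv u v + r ^+ 2 * dotv v v.
Proof. rewrite !(dotvDl, dotvDr, dotvZl, dotvZr) (dotvC v u); ring. Qed.
End V.
Lemma key {R : rcfType} (e s11 s12 s22 t r' : R) :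
  e ^+ 2 < 1 -> 0 <= s11 -> 0 <= s22 -> s12 ^+ 2 <= s11 * s22 ->
  let h1 := 1 - e ^+ 2 in
  let h2 := - s11 - s22 + 2 * e * s12 in
  let h3 := s11 * s22 - s12 ^+ 2 in
  let sigma := (- h2 + Num.sqrt (h2 ^+ 2 - 4 * h1 * h3)) / (2 * h1) in
  t + e * r' = Num.sqrt (sigma - s11) ->
  e * t + r' = Num.sqrt (sigma - s22) * Num.sg (e * sigma - s12) ->
  t ^+ 2 + 2 * e * t * r' + r' ^+ 2 <= sigma.
Proof.
move=> He h11 h22 hcs h1 h2 h3 sigma Ht Hr.
have h1p : 0 < h1 by rewrite /h1; lra.
set D := h2 ^+ 2 - 4 * h1 * h3.
have DE : D = (2 * h1 * s11 + h2) ^+ 2 + 4 * h1 * (e * s11 - s12) ^+ 2.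
  by rewrite /D /h1 /h2 /h3; ring.
have DE2 : D = (2 * h1 * s22 + h2) ^+ 2 + 4 * h1 * (e * s22 - s12) ^+ 2.
  by rewrite /D /h1 /h2 /h3; ring.
have D0 : 0 <= D.
  rewrite DE; apply: addr_ge0; first exact: sqr_ge0.
  apply: mulr_ge0; [lra | exact: sqr_ge0].
set r := Num.sqrt D.
have rr : r ^+ 2 = D by rewrite sqr_sqrtr.
have r0 : 0 <= r by rewrite sqrtr_ge0.
have hs : 2 * h1 * sigma = - h2 + r by rewrite /sigma -/D -/r; field; lra.
set w := e * sigma - s12.
have proot : (sigma - s11) * (sigma - s22) = w ^+ 2.
  have : 4 * h1 * ((sigma - s11) * (sigma - s22) - w ^+ 2) = 0.
    have -> : 4 * h1 * ((sigma - s11) * (sigma - s22) - w ^+ 2)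
       = (2 * h1 * sigma + h2) ^+ 2 - D by rewrite /w /D /h1 /h2 /h3; ring.
    by rewrite hs -rr; ring.
  move/eqP; rewrite mulf_eq0 subr_eq0 => /orP [|/eqP //].
  rewrite mulf_eq0 => /orP [] /eqP; lra.
have s11s : s11 <= sigma.
  have x2 : (2 * h1 * s11 + h2) ^+ 2 <= r ^+ 2.
    rewrite rr DE lerDl; apply: mulr_ge0; [lra | exact: sqr_ge0].
  have : 2 * h1 * s11 + h2 <= r by nra.
  nra.
have s22s : s22 <= sigma.
  have x2 : (2 * h1 * s22 + h2) ^+ 2 <= r ^+ 2.
    rewrite rr DE2 lerDl; apply: mulr_ge0; [lra | exact: sqr_ge0].
  have : 2 * h1 * s22 + h2 <= r by nra.
  nra.
have h3p : 0 <= h3 by rewrite /h3; lra.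
have h2n : 0 <= - h2.
  have e1 : (e * s12) ^+ 2 <= s12 ^+ 2.
    rewrite exprMn; have := sqr_ge0 s12; nra.
  have e2 : (e * s12) ^+ 2 <= ((s11 + s22) / 2) ^+ 2.
    have : s11 * s22 <= ((s11 + s22) / 2) ^+ 2.
      have := sqr_ge0 (s11 - s22); move=> hh.
      have -> : ((s11 + s22) / 2) ^+ 2 = s11 * s22 + (s11 - s22) ^+ 2 / 4 by field.
      lra.
    lra.
  have : e * s12 <= (s11 + s22) / 2 by nra.
  rewrite /h2; lra.
have rh2 : r + h2 <= 0.
  have : r ^+ 2 <= h2 ^+ 2.
    rewrite rr /D; have : 0 <= 4 * h1 * h3 by apply: mulr_ge0; lra.
    lra.
  nra.
set a := Num.sqrt (sigma - s11).
set c0 := Num.sqrt (sigma - s22).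
have a2 : a ^+ 2 = sigma - s11 by rewrite sqr_sqrtr // subr_ge0.
have c2 : c0 ^+ 2 = sigma - s22 by rewrite sqr_sqrtr // subr_ge0.
have ac0 : a * c0 = `|w| by rewrite /a /c0 -sqrtrM ?subr_ge0 // proot sqrtr_sqr.
have ac : a * (c0 * Num.sg w) = w by rewrite mulrA ac0 mulrC mulr_sg_norm.
have cc : (c0 * Num.sg w) ^+ 2 <= sigma - s22.
  rewrite exprMn sqr_sg c2; case: (w != 0); rewrite ?mulr1 ?mulr0 //.
  by rewrite subr_ge0.
move: Ht Hr; rewrite -/a -/c0 -/w => Ht Hr.
have idE : h1 * (t ^+ 2 + 2 * e * t * r' + r' ^+ 2)
   = (t + e * r') ^+ 2 - 2 * e * ((t + e * r') * (e * t + r')) + (e * t + r') ^+ 2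
   by rewrite /h1; ring.
rewrite Ht Hr ac a2 in idE.
have : h1 * (t ^+ 2 + 2 * e * t * r' + r' ^+ 2 - sigma) <= 0.
  rewrite mulrBr idE.
  have : h1 * sigma + h2 <= 0 by lra.
  rewrite /w /h1 /h2 in cc * => hh.
  lra.
rewrite pmulr_rle0 //; lra.
Qed.

Theorem claim3 (R : rcfType) (m n : nat) (A : 'M[R]_(m, n)) (b : 'cV[R]_m)
    (xk xk1 : 'cV[R]_n) :
  grad_f A b xk != 0 ->
  xk != xk1 ->
  let g := (enorm (grad_f A b xk))^-1 *: grad_f A b xk in
  let d := (enorm (xk - xk1))^-1 *: (xk - xk1) in
  let eps := dotv g d in
  eps ^+ 2 < 1 ->
  let AtA := A^T *m A in
  let S11 := dotv g (AtA *m g) in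
  let S12 := dotv g (AtA *m d) in
  let S22 := dotv d (AtA *m d) in
  let eta1 := 1 - eps ^+ 2 in
  let eta2 := - S11 - S22 + 2 * eps * S12 in
  let eta3 := S11 * S22 - S12 ^+ 2 in
  let sigma := (- eta2 + Num.sqrt (eta2 ^+ 2 - 4 * eta1 * eta3)) / (2 * eta1) in
  forall tau rho : R,
    tau + eps * rho = Num.sqrt (sigma - S11) ->
    eps * tau + rho = Num.sqrt (sigma - S22) * Num.sg (eps * sigma - S12) ->
    let u := tau *: g + rho *: d in
    psd (sigma%:M - u *m u^T).
Proof.
move=> Hg Hx g d eps Heps AtA S11 S12 S22 eta1 eta2 eta3 sigma tau rho Ht Hr u.
have gg : dotv g g = 1 by apply: dotv_unit.
have dd : dotv d d = 1 by apply: dotv_unit; rewrite subr_eq0.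
have e11 : S11 = dotv (A *m g) (A *m g) by rewrite /S11 /dotv /AtA trmx_mul !mulmxA.
have e12 : S12 = dotv (A *m g) (A *m d) by rewrite /S12 /dotv /AtA trmx_mul !mulmxA.
have e22 : S22 = dotv (A *m d) (A *m d) by rewrite /S22 /dotv /AtA trmx_mul !mulmxA.
have h11 : 0 <= S11 by rewrite e11 dotv_ge0.
have h22 : 0 <= S22 by rewrite e22 dotv_ge0.
have hcs : S12 ^+ 2 <= S11 * S22 by rewrite e11 e12 e22 dotv_CS.
have K : tau ^+ 2 + 2 * eps * tau * rho + rho ^+ 2 <= sigma := @key R eps S11 S12 S22 tau rho Heps h11 h22 hcs Ht Hr.
have uu : dotv u u = tau ^+ 2 + 2 * eps * tau * rho + rho ^+ 2.
  rewrite /u dotv_comb gg dd -/eps; ring.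
split; first exact: symmE.
move=> v; rewrite quadE subr_ge0.
have cs := dotv_CS v u.
have vv := dotv_ge0 v.
rewrite -uu in K.
apply: (le_trans cs); rewrite mulrC; exact: ler_wpM2r.
Qed.
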